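(* Let $(X,\le)$ be a partially ordered set and $\tau$ a topology on $X$. Assume that: (i) every nonempty $\tau$-open set contains a diamond $J(a,b):=\{c\in X:a\le c\le b\}$ with nonempty $\tau$-interior; (ii) for any sequences $(a_n),(b_n)\subset X$ with $a_n\le a_{n+1}\le b_{n+1}\le b_n$ for all $n\in\mathbb N$, there is $c\in X$ with $a_n\le c\le b_n$ for all $n$. Then for every sequence $(U_n)$ of $\tau$-open $\tau$-dense subsets of $X$, the set $\bigcap_nU_n$ is $\tau$-dense. *)

(* Defs.v *)
From Stdlib Require Import Classical.

Definition subset {X : Type} (A B : X -> Prop) : Prop := forall x, A x -> B x.

Definition is_partial_order {X : Type} (le : X -> X -> Prop) : Prop :=
  (forall x, le x x) /\
  (forall x y, le x y -> le y x -> x = y) /\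
  (forall x y z, le x y -> le y z -> le x z).

Definition is_topology {X : Type} (opens : (X -> Prop) -> Prop) : Prop :=
  opens (fun _ => True) /\
  opens (fun _ => False) /\
  (forall U V, opens U -> opens V -> opens (fun x => U x /\ V x)) /\
  (forall (F : (X -> Prop) -> Prop), (forall U, F U -> opens U) ->
      opens (fun x => exists U, F U /\ U x)).

Definition nonempty {X : Type} (A : X -> Prop) : Prop := exists x, A x.

Definition interior {X : Type} (opens : (X -> Prop) -> Prop) (A : X -> Prop) : X -> Prop :=
  fun x => exists U, opens U /\ U x /\ subset U A.

Definition dense {X : Type} (opens : (X -> Prop) -> Prop) (A : X -> Prop) : Prop :=
  forall U, opens U -> nonempty U -> exists x, U x /\ A x.

Definition diamond {X : Type} (le : X -> X -> Prop) (a b : X) : X -> Prop :=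
  fun c => le a c /\ le c b.

(* Main.v *)
Require Import Defs.
From Stdlib Require Import ClassicalEpsilon FunctionalExtensionality PropExtensionality.

Lemma interior_open {X : Type} (opens : (X -> Prop) -> Prop) (A : X -> Prop) :
  is_topology opens -> opens (interior opens A).
Proof.
  intros [_ [_ [_ Hu]]].
  assert (E : interior opens A = (fun x => exists W, (opens W /\ subset W A) /\ W x)).
  { apply functional_extensionality; intro x; apply propositional_extensionality.
    unfold interior; split.
    - intros [W [h1 [h2 h3]]]; exists W; tauto.
    - intros [W [[h1 h3] h2]]; exists W; tauto. }
  rewrite E. apply Hu. intros W [h _]; exact h.
Qed.

Lemma interior_sub {X : Type} (opens : (X -> Prop) -> Prop) (A : X -> Prop) x :
  interior opens A x -> A x.
Proof. intros [W [_ [h1 h2]]]; apply h2; exact h1. Qed.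

Theorem mainTheorem17 (X : Type) (le : X -> X -> Prop) (opens : (X -> Prop) -> Prop)
  (Hpo : is_partial_order le) (Htop : is_topology opens)
  (Hdiam : forall U, opens U -> nonempty U ->
     exists a b, subset (diamond le a b) U /\ nonempty (interior opens (diamond le a b)))
  (Hnest : forall a b : nat -> X,
     (forall n, le (a n) (a (S n)) /\ le (a (S n)) (b (S n)) /\ le (b (S n)) (b n)) ->
     exists c, forall n, le (a n) c /\ le c (b n))
  (U : nat -> X -> Prop) (HUo : forall n, opens (U n)) (HUd : forall n, dense opens (U n)) :
  dense opens (fun x => forall n, U n x).
Proof.
  intros V HV HVne.
  set (P := fun p : X * X => nonempty (interior opens (diamond le (fst p) (snd p)))).
  assert (step : forall n (p : {p : X * X | P p}),
    {q : X * X | subset (diamond le (fst q) (snd q))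
        (fun x => interior opens (diamond le (fst (proj1_sig p)) (snd (proj1_sig p))) x /\ U n x)
        /\ P q}).
  { intros n [[a b] Hp]. apply constructive_indefinite_description. simpl.
    pose proof Htop as [_ [_ [Hi _]]].
    assert (Ho : opens (fun x => interior opens (diamond le a b) x /\ U n x)).
    { apply Hi; [apply interior_open; exact Htop | apply HUo]. }
    assert (Hne : nonempty (fun x => interior opens (diamond le a b) x /\ U n x)).
    { destruct (HUd n _ (interior_open opens _ Htop) Hp) as [x Hx]. exists x; exact Hx. }
    destruct (Hdiam _ Ho Hne) as [a' [b' [H1 H2]]].
    exists (a', b'); simpl; split; assumption. }
  assert (init : {q : X * X | subset (diamond le (fst q) (snd q)) V /\ P q}).
  { apply constructive_indefinite_description.
    destruct (Hdiam _ HV HVne) as [a [b [H1 H2]]]. exists (a, b); auto. }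
  set (p0 := exist P (proj1_sig init) (proj2 (proj2_sig init))).
  set (seq := fix seq (n : nat) : {p : X * X | P p} :=
    match n with
    | O => p0
    | S m => exist P (proj1_sig (step m (seq m))) (proj2 (proj2_sig (step m (seq m))))
    end).
  set (a := fun n => fst (proj1_sig (seq n))).
  set (b := fun n => snd (proj1_sig (seq n))).
  assert (Hsub : forall n, subset (diamond le (a (S n)) (b (S n)))
       (fun x => diamond le (a n) (b n) x /\ U n x)).
  { intros n x Hx. unfold a, b in *. simpl in Hx.
    destruct (proj1 (proj2_sig (step n (seq n))) x Hx) as [h1 h2].
    split; [apply (interior_sub opens); exact h1 | exact h2]. }
  destruct Hpo as [Hr [_ Ht]].
  assert (Hself : forall n, diamond le (a n) (a n) (a n) /\ True) by (intros; split; [split; apply Hr|trivial]).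
  destruct (Hnest a b) as [c Hc].
  { intro n.
    assert (Ha : diamond le (a (S n)) (b (S n)) (a (S n))).
    { destruct (proj2_sig (seq (S n))) as [y Hy].
      apply interior_sub in Hy. destruct Hy as [h1 h2]. split; [apply Hr | eapply Ht; eauto]. }
    assert (Hb : diamond le (a (S n)) (b (S n)) (b (S n))).
    { destruct Ha as [h1 h2]. split; [exact h2 | apply Hr]. }
    destruct (Hsub n _ Ha) as [[h1 _] _].
    destruct (Hsub n _ Hb) as [[_ h2] _].
    split; [exact h1 | split; [exact (proj2 Ha) | exact h2]]. }
  exists c. split.
  - apply (proj1 (proj2_sig init)). exact (Hc 0).
  - intro n. apply (Hsub n c (Hc (S n))).
Qed.
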